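(* Let $f \in \mathrm{Inj}(\Omega)$ satisfy $(f)\mathrm{C}_{\mathrm{open}} + (f)\mathrm{C}_{\mathrm{fwd}} = 1$ and $(f)\mathrm{C}_n < \aleph_0$ for all $n \in \mathbb{Z}_+$, and let $h \in \mathrm{Fin}(\Omega)$ be a transposition. Then $$\sum_{n \in \mathbb{Z}_+} ((f)\mathrm{C}_n - (fh)\mathrm{C}_n) = \sum_{n \in \mathbb{Z}_+} ((f)\mathrm{C}_n - (hf)\mathrm{C}_n) \in \{-1,1\}$$ (only finitely many terms of each sum are nonzero).
   Context: $\Omega$ is a countably infinite set; maps are written on the right and composed left to right. $\mathrm{Inj}(\Omega)$ is the monoid of injective maps $\Omega\to\Omega$; $\mathrm{Fin}(\Omega)$ the permutations moving only finitely many points; a transposition swaps two distinct points and fixes all others. For $f\in\mathrm{Inj}(\Omega)$, a cycle of $f$ is a nonempty $\Sigma\subseteq\Omega$ such that (a) for all $\alpha\in\Omega$, $(\alpha)f\in\Sigma$ iff $\alpha\in\Sigma$, and (b) no proper nonempty subset of $\Sigma$ satisfies (a). A forward cycle is an infinite cycle $\Sigma$ with $\Sigma\setminus(\Omega)f\ne\emptyset$; an open cycle is an infinite cycle that is not forward. $(f)\mathrm{C}_n$ ($n\in\mathbb{Z}_+$) is the cardinal number of cycles of cardinality $n$; $(f)\mathrm{C}_{\mathrm{open}}$, $(f)\mathrm{C}_{\mathrm{fwd}}$ the numbers of open and forward cycles. *)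

(* Defs.v *)
From Stdlib Require Import ZArith List Arith.
Import ListNotations.

Section D.
Context {T : Type}.

Definition injective (f : T -> T) : Prop := forall x y, f x = f y -> x = y.

Definition countably_infinite (U : Type) : Prop :=
  exists e : nat -> U, (forall m n, e m = e n -> m = n) /\ (forall x, exists n, e n = x).

Definition same_set (A B : T -> Prop) : Prop := forall x, A x <-> B x.

Definition invariant (f : T -> T) (S : T -> Prop) : Prop :=
  forall a, S (f a) <-> S a.

Definition is_cycle (f : T -> T) (S : T -> Prop) : Prop :=
  (exists x, S x) /\ invariant f S /\
  forall S' : T -> Prop,
    (forall x, S' x -> S x) -> (exists x, S' x) -> (exists x, S x /\ ~ S' x) ->
    ~ invariant f S'.

Definition has_size (S : T -> Prop) (n : nat) : Prop :=
  exists l : list T, NoDup l /\ length l = n /\ forall x, S x <-> In x l.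

Definition infinite_set (S : T -> Prop) : Prop := forall n, ~ has_size S n.

Definition not_in_image (f : T -> T) (S : T -> Prop) : Prop :=
  exists x, S x /\ forall y, f y <> x.

Definition forward_cycle (f : T -> T) (S : T -> Prop) : Prop :=
  is_cycle f S /\ infinite_set S /\ not_in_image f S.

Definition open_cycle (f : T -> T) (S : T -> Prop) : Prop :=
  is_cycle f S /\ infinite_set S /\ ~ not_in_image f S.

Definition family_card (P : (T -> Prop) -> Prop) (k : nat) : Prop :=
  exists l : list (T -> Prop),
    length l = k /\
    (forall S, In S l -> P S) /\
    (forall S, P S -> exists S', In S' l /\ same_set S S') /\
    (forall i j, i < j -> j < k ->
       ~ same_set (nth i l (fun _ => False)) (nth j l (fun _ => False))).

Definition Cn (f : T -> T) (n k : nat) : Prop :=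
  family_card (fun S => is_cycle f S /\ has_size S n) k.

Definition Copen (f : T -> T) (k : nat) : Prop := family_card (open_cycle f) k.
Definition Cfwd (f : T -> T) (k : nat) : Prop := family_card (forward_cycle f) k.

Definition transposition (h : T -> T) : Prop :=
  exists a b, a <> b /\ h a = b /\ h b = a /\ forall x, x <> a -> x <> b -> h x = x.

(* maps written on the right, composed left to right: (x)(fg) = ((x)f)g *)
Definition comp_lr (f g : T -> T) : T -> T := fun x => g (f x).

End D.

Fixpoint zdiff_sum (a b : nat -> nat) (N : nat) : Z :=
  match N with
  | O => 0%Z
  | S m => (zdiff_sum a b m + (Z.of_nat (a (S m)) - Z.of_nat (b (S m))))%Z
  end.

(* Main.v *)
Require Import Defs.
From Stdlib Require Import ZArith List Arith Lia Classical ClassicalEpsilon.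
Import ListNotations.

Fixpoint it {T : Type} (g : T -> T) (n : nat) (x : T) : T :=
  match n with 0 => x | S n => g (it g n x) end.

Definition comp {T : Type} (g : T -> T) (x y : T) : Prop :=
  exists i j, it g i x = it g j y.

Lemma it_add {T : Type} (g : T -> T) m n x : it g (m + n) x = it g m (it g n x).
Proof. induction m; simpl; congruence. Qed.

Lemma it_S' {T : Type} (g : T -> T) n x : it g (S n) x = it g n (g x).
Proof. replace (S n) with (n + 1) by lia. rewrite it_add. reflexivity. Qed.

Lemma it_inj {T : Type} (g : T -> T) n x y :
  injective g -> it g n x = it g n y -> x = y.
Proof. intros Hg. induction n; simpl; auto. Qed.

Lemma it_diff {T : Type} (g : T -> T) m n x :
  injective g -> m < n -> it g m x = it g n x -> it g (n - m) x = x.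
Proof.
  intros Hg Hmn E. replace n with (m + (n - m)) in E by lia.
  rewrite it_add in E. symmetry. eapply it_inj; eauto.
Qed.

Lemma comp_refl {T : Type} (g : T -> T) x : comp g x x.
Proof. exists 0, 0. reflexivity. Qed.

Lemma comp_sym {T : Type} (g : T -> T) x y : comp g x y -> comp g y x.
Proof. intros [i [j E]]. exists j, i. auto. Qed.

Lemma comp_trans {T : Type} (g : T -> T) x y z :
  comp g x y -> comp g y z -> comp g x z.
Proof.
  intros [i [j E]] [k [l F]]. exists (k + i), (j + l).
  rewrite it_add, E, <- it_add, (Nat.add_comm k j), it_add, F, <- it_add. reflexivity.
Qed.

Lemma comp_it {T : Type} (g : T -> T) x k : comp g x (it g k x).
Proof. exists k, 0. reflexivity. Qed.

Lemma comp_g {T : Type} (g : T -> T) x y : comp g x (g y) <-> comp g x y.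
Proof.
  split.
  - intros [i [j E]]. exists i, (S j). rewrite E, it_S'. reflexivity.
  - intros [i [j E]]. exists (S i), j. rewrite <- it_S'. simpl. rewrite E. reflexivity.
Qed.

Lemma inv_it {T : Type} (g : T -> T) (A : T -> Prop) k y :
  invariant g A -> (A (it g k y) <-> A y).
Proof.
  intros HS. unfold invariant in HS. induction k; simpl. tauto. rewrite HS. auto.
Qed.

Lemma cycle_char {T : Type} (g : T -> T) S :
  is_cycle g S <-> exists x, same_set S (comp g x).
Proof.
  split.
  - intros [[x Hx] [Hinv Hmin]]. exists x.
    assert (Hsub : forall y, comp g x y -> S y).
    { intros y [i [j E]]. apply (inv_it g S j y Hinv). rewrite <- E.
      apply (inv_it g S i x Hinv). auto. }
    intros y. split; auto. intros Hy. apply NNPP. intros Hn.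
    apply (Hmin (comp g x)); auto.
    + exists x. apply comp_refl.
    + exists y. auto.
    + intros w. rewrite comp_g. tauto.
  - intros [x Hx]. split; [|split].
    + exists x. apply Hx. apply comp_refl.
    + intros w. rewrite (Hx (g w)), (Hx w). apply comp_g.
    + intros S' Hsub [y Hy] [z [Hz Hnz]] Hinv.
      apply Hnz. assert (comp g y z).
      { apply comp_trans with x. apply comp_sym. apply Hx. auto. apply Hx. auto. }
      destruct H as [i [j E]]. apply (inv_it g S' j z Hinv). rewrite <- E.
      apply (inv_it g S' i y Hinv). auto.
Qed.

Lemma same_set_sym {T : Type} (A B : T -> Prop) : same_set A B -> same_set B A.
Proof. intros H x. rewrite (H x). tauto. Qed.
Lemma same_set_trans {T : Type} (A B C : T -> Prop) :
  same_set A B -> same_set B C -> same_set A C.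
Proof. intros H1 H2 x. rewrite (H1 x). auto. Qed.

Lemma cycle_at {T : Type} (g : T -> T) S x :
  is_cycle g S -> S x -> same_set S (comp g x).
Proof.
  intros HS Hx. apply cycle_char in HS. destruct HS as [y Hy].
  intros z. rewrite (Hy z). split; intros H.
  - apply comp_trans with y; auto. apply comp_sym, Hy, Hx.
  - apply comp_trans with x; auto. apply Hy, Hx.
Qed.

Lemma comp_same {T : Type} (g : T -> T) x y :
  comp g x y -> same_set (comp g x) (comp g y).
Proof.
  intros H z. split; intros H'.
  - eapply comp_trans; [apply comp_sym, H|auto].
  - eapply comp_trans; eauto.
Qed.

Lemma hs_ext {T : Type} (A B : T -> Prop) n :
  same_set A B -> has_size A n -> has_size B n.
Proof.
  intros H [l [Hl [Hn Hm]]]. exists l. repeat split; auto; intros Hx.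
  - apply Hm, H, Hx.
  - apply H, Hm, Hx.
Qed.

Lemma hs_uniq {T : Type} (A : T -> Prop) n m :
  has_size A n -> has_size A m -> n = m.
Proof.
  intros [l [Hl [Hn Hm]]] [l' [Hl' [Hn' Hm']]].
  assert (length l <= length l').
  { apply NoDup_incl_length; auto. intros x Hx. apply Hm', Hm, Hx. }
  assert (length l' <= length l).
  { apply NoDup_incl_length; auto. intros x Hx. apply Hm, Hm', Hx. }
  lia.
Qed.

Lemma hs_pos {T : Type} (A : T -> Prop) x n : A x -> has_size A n -> 1 <= n.
Proof.
  intros Hx [l [Hl [Hn Hm]]]. apply Hm in Hx. destruct l; simpl in *. contradiction. lia.
Qed.

Definition per {T : Type} (g : T -> T) x p : Prop :=
  1 <= p /\ it g p x = x /\ forall m, 1 <= m -> m < p -> it g m x <> x.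

Definition Per {T : Type} (g : T -> T) x : Prop := exists m, 1 <= m /\ it g m x = x.

Lemma it_mult {T : Type} (g : T -> T) m x c : it g m x = x -> it g (c * m) x = x.
Proof.
  intros H. induction c; simpl. auto. rewrite it_add, IHc. auto.
Qed.

Lemma it_mod {T : Type} (g : T -> T) m x e :
  1 <= m -> it g m x = x -> it g e x = it g (e mod m) x.
Proof.
  intros Hm H. rewrite (Nat.div_mod_eq e m) at 1.
  rewrite Nat.add_comm, it_add, Nat.mul_comm, it_mult; auto.
Qed.

Lemma per_char {T : Type} (g : T -> T) m x y :
  injective g -> 1 <= m -> it g m x = x -> comp g x y -> exists k, k < m /\ y = it g k x.
Proof.
  intros Hg Hm Hx [i [j E]].
  assert (E2 : it g j y = it g (j + (i + j * m - j)) x).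
  { replace (j + (i + j * m - j)) with (i + j * m) by nia.
    rewrite it_add, it_mult; auto. }
  rewrite it_add in E2. apply it_inj in E2; auto.
  exists ((i + j * m - j) mod m). split. apply Nat.mod_upper_bound; lia.
  rewrite E2. apply it_mod; auto.
Qed.

Lemma Per_comp {T : Type} (g : T -> T) x y :
  injective g -> Per g x -> comp g x y -> Per g y.
Proof.
  intros Hg [m [Hm Hx]] Hc. destruct (per_char g m x y Hg Hm Hx Hc) as [k [Hk ->]].
  exists m. split; auto. rewrite <- it_add, Nat.add_comm, it_add, Hx. auto.
Qed.

Lemma NoDup_map_seq {A : Type} (F : nat -> A) len start :
  (forall i j, start <= i -> i < j -> j < start + len -> F i <> F j) ->
  NoDup (map F (seq start len)).
Proof.
  revert start. induction len; intros start H; simpl. constructor.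
  constructor.
  - intros Hin. apply in_map_iff in Hin. destruct Hin as [i [Ei Hi]].
    apply in_seq in Hi. apply (H start i); auto; lia.
  - apply IHlen. intros i j Hi Hij Hj. apply H; lia.
Qed.

Lemma per_hs {T : Type} (g : T -> T) x p :
  injective g -> per g x p -> has_size (comp g x) p.
Proof.
  intros Hg [Hp [Hx Hmin]].
  exists (map (fun i => it g i x) (seq 0 p)). split; [|split].
  - apply NoDup_map_seq. intros i j Hi Hij Hj E.
    apply it_diff in E; auto. apply (Hmin (j - i)); auto; lia.
  - rewrite length_map, length_seq. auto.
  - intros y. rewrite in_map_iff. split.
    + intros Hc. destruct (per_char g p x y Hg Hp Hx Hc) as [k [Hk ->]].
      exists k. split; auto. apply in_seq. lia.
    + intros [k [<- _]]. apply comp_it.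
Qed.

Lemma min_exists (Q : nat -> Prop) : (exists m, Q m) -> exists m, Q m /\ forall k, k < m -> ~ Q k.
Proof.
  intros [m Hm]. revert Hm. induction m as [m IH] using lt_wf_ind. intros Hm.
  destruct (classic (exists k, k < m /\ Q k)) as [[k [Hk HQ]]|Hn].
  - apply (IH k Hk HQ).
  - exists m. split; auto. intros k Hk HQ. apply Hn. eauto.
Qed.

Lemma Per_per {T : Type} (g : T -> T) x : Per g x -> exists p, per g x p.
Proof.
  intros HP. destruct (min_exists (fun m => 1 <= m /\ it g m x = x) HP) as [p [[Hp Hx] Hmin]].
  exists p. split; auto. split; auto. intros m Hm Hmp E. apply (Hmin m Hmp). auto.
Qed.

Lemma hs_Per {T : Type} (g : T -> T) x n :
  injective g -> has_size (comp g x) n -> Per g x.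
Proof.
  intros Hg [l [Hl [Hn Hm]]]. apply NNPP. intros HnP.
  assert (length (map (fun i => it g i x) (seq 0 (S n))) <= length l).
  { apply NoDup_incl_length.
    - apply NoDup_map_seq. intros i j Hi Hij Hj E.
      apply it_diff in E; auto. apply HnP. exists (j - i). split; auto. lia.
    - intros y Hy. apply in_map_iff in Hy. destruct Hy as [k [<- _]]. apply Hm, comp_it. }
  rewrite length_map, length_seq in H. lia.
Qed.

Lemma hs_iff {T : Type} (g : T -> T) x n :
  injective g -> (has_size (comp g x) n <-> per g x n).
Proof.
  intros Hg. split.
  - intros H. destruct (Per_per g x (hs_Per g x n Hg H)) as [p Hp].
    pose proof (per_hs g x p Hg Hp). rewrite (hs_uniq _ _ _ H H0). auto.
  - apply per_hs; auto.
Qed.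

Lemma fin_iff {T : Type} (g : T -> T) x :
  injective g -> ((exists n, has_size (comp g x) n) <-> Per g x).
Proof.
  intros Hg. split.
  - intros [n H]. eapply hs_Per; eauto.
  - intros H. destruct (Per_per g x H) as [p Hp]. exists p. apply per_hs; auto.
Qed.

Fixpoint dist {T : Type} (l : list (T -> Prop)) : Prop :=
  match l with
  | [] => True
  | A :: l' => (forall B, In B l' -> ~ same_set A B) /\ dist l'
  end.

Definition fc {T : Type} (P : (T -> Prop) -> Prop) (l : list (T -> Prop)) : Prop :=
  (forall A, In A l -> P A) /\ (forall A, P A -> exists B, In B l /\ same_set A B) /\ dist l.

Lemma dist_nth {T : Type} (l : list (T -> Prop)) :
  dist l <-> forall i j, i < j -> j < length l ->
     ~ same_set (nth i l (fun _ => False)) (nth j l (fun _ => False)).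
Proof.
  induction l as [|A l IH]; simpl.
  - split; auto. intros _ i j Hij Hj. lia.
  - split.
    + intros [H1 H2] i j Hij Hj. destruct i, j; try lia.
      * apply H1. apply nth_In. lia.
      * apply IH; auto; lia.
    + intros H. split.
      * intros B HB. destruct (In_nth l B (fun _ => False) HB) as [n [Hn E]].
        rewrite <- E. apply (H 0 (S n)); lia.
      * apply IH. intros i j Hij Hj. apply (H (S i) (S j)); lia.
Qed.

Lemma fc_family {T : Type} (P : (T -> Prop) -> Prop) k :
  family_card P k <-> exists l, length l = k /\ fc P l.
Proof.
  split.
  - intros [l [Hl [H1 [H2 H3]]]]. exists l. split; auto. split; auto. split; auto.
    apply dist_nth. subst. auto.
  - intros [l [Hl [H1 [H2 H3]]]]. exists l. split; auto. split; auto. split; auto.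
    subst. apply dist_nth. auto.
Qed.

Lemma fc_ext {T : Type} (P Q : (T -> Prop) -> Prop) l :
  (forall A, P A <-> Q A) -> fc P l -> fc Q l.
Proof.
  intros E [H1 [H2 H3]]. split; [|split]; auto.
  - intros A HA. apply E. auto.
  - intros A HA. apply H2, E, HA.
Qed.

Lemma partition_ex {T : Type} (D : (T -> Prop) -> Prop) (l : list (T -> Prop)) :
  exists l1 l2, (forall A, In A l1 <-> In A l /\ D A) /\ (forall A, In A l2 <-> In A l /\ ~ D A)
    /\ length l1 + length l2 = length l /\ (dist l -> dist l1 /\ dist l2).
Proof.
  induction l as [|A l IH].
  - exists [], []. simpl. repeat split; try tauto.
  - destruct IH as [l1 [l2 [H1 [H2 [H3 H4]]]]].
    destruct (classic (D A)) as [HD|HD].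
    + exists (A :: l1), l2. simpl. split; [|split; [|split]].
      * intros B. rewrite (H1 B). split; [intros [<-|[? ?]]|intros [[<-|?] ?]]; auto.
      * intros B. rewrite (H2 B). split; [intros [? ?]|intros [[<-|?] ?]]; auto; contradiction.
      * lia.
      * intros [Hd1 Hd2]. destruct (H4 Hd2). split; auto. split; auto.
        intros B HB. apply Hd1. apply H1. auto.
    + exists l1, (A :: l2). simpl. split; [|split; [|split]].
      * intros B. rewrite (H1 B). split; [intros [? ?]|intros [[<-|?] ?]]; auto; contradiction.
      * intros B. rewrite (H2 B). split; [intros [<-|[? ?]]|intros [[<-|?] ?]]; auto.
      * lia.
      * intros [Hd1 Hd2]. destruct (H4 Hd2). split; auto. split; auto.
        intros B HB. apply Hd1. apply H2. auto.
Qed.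

Lemma fc_split {T : Type} (P D : (T -> Prop) -> Prop) l :
  (forall A B, same_set A B -> D A -> D B) ->
  fc P l -> exists l1 l2, fc (fun A => P A /\ D A) l1 /\ fc (fun A => P A /\ ~ D A) l2
     /\ length l1 + length l2 = length l.
Proof.
  intros HD [F1 [F2 F3]].
  destruct (partition_ex D l) as [l1 [l2 [H1 [H2 [H3 H4]]]]].
  destruct (H4 F3) as [D1 D2].
  exists l1, l2. split; [|split]; auto.
  - split; [|split]; auto.
    + intros A HA. apply H1 in HA. destruct HA. auto.
    + intros A [HA HDA]. destruct (F2 A HA) as [B [HB E]]. exists B. split; auto.
      apply H1. split; auto. eapply HD; eauto.
  - split; [|split]; auto.
    + intros A HA. apply H2 in HA. destruct HA. auto.
    + intros A [HA HDA]. destruct (F2 A HA) as [B [HB E]]. exists B. split; auto.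
      apply H2. split; auto. intros HB'. apply HDA. eapply HD; [apply same_set_sym|]; eauto.
Qed.

Lemma dist_app {T : Type} (l1 l2 : list (T -> Prop)) :
  dist l1 -> dist l2 -> (forall A B, In A l1 -> In B l2 -> ~ same_set A B) -> dist (l1 ++ l2).
Proof.
  induction l1 as [|A l1 IH]; simpl; auto.
  intros [Ha Hb] H2 H. split.
  - intros B HB. apply in_app_or in HB. destruct HB; auto.
  - apply IH; auto.
Qed.

Lemma fc_union {T : Type} (P R : (T -> Prop) -> Prop) l1 l2 :
  fc P l1 -> fc R l2 -> (forall A B, P A -> R B -> ~ same_set A B) ->
  fc (fun A => P A \/ R A) (l1 ++ l2).
Proof.
  intros [F1 [F2 F3]] [G1 [G2 G3]] Hd. split; [|split].
  - intros A HA. apply in_app_or in HA. destruct HA; auto.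
  - intros A [HA|HA].
    + destruct (F2 A HA) as [B [? ?]]. exists B. split; auto. apply in_or_app. auto.
    + destruct (G2 A HA) as [B [? ?]]. exists B. split; auto. apply in_or_app. auto.
  - apply dist_app; auto.
Qed.

Lemma dist_le {T : Type} (l1 l2 : list (T -> Prop)) :
  dist l1 -> (forall A, In A l1 -> exists B, In B l2 /\ same_set A B) -> length l1 <= length l2.
Proof.
  revert l2. induction l1 as [|A l1 IH]; intros l2 Hd H; simpl. lia.
  destruct Hd as [Hd1 Hd2].
  destruct (H A (or_introl eq_refl)) as [B [HB E]].
  destruct (in_split B l2 HB) as [u [v ->]].
  assert (length l1 <= length (u ++ v)).
  { apply IH; auto. intros X HX. destruct (H X (or_intror HX)) as [Y [HY EY]].
    exists Y. split; auto. apply in_app_or in HY. destruct HY as [HY|[HY|HY]].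
    - apply in_or_app; auto.
    - subst Y. exfalso. apply (Hd1 X HX). eapply same_set_trans; eauto. apply same_set_sym. auto.
    - apply in_or_app; auto. }
  rewrite length_app in *. simpl. lia.
Qed.

Lemma fc_uniq {T : Type} (P : (T -> Prop) -> Prop) l1 l2 :
  fc P l1 -> fc P l2 -> length l1 = length l2.
Proof.
  intros [F1 [F2 F3]] [G1 [G2 G3]].
  assert (length l1 <= length l2) by (apply dist_le; auto).
  assert (length l2 <= length l1) by (apply dist_le; auto).
  lia.
Qed.

Definition ind (P : Prop) : nat := if excluded_middle_informative P then 1 else 0.

Lemma ind_T (P : Prop) : P -> ind P = 1.
Proof. unfold ind. destruct (excluded_middle_informative P); tauto. Qed.
Lemma ind_F (P : Prop) : ~ P -> ind P = 0.
Proof. unfold ind. destruct (excluded_middle_informative P); tauto. Qed.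
Lemma ind_ext (P Q : Prop) : (P <-> Q) -> ind P = ind Q.
Proof.
  intros E. destruct (classic P).
  - rewrite !ind_T; tauto.
  - rewrite !ind_F; tauto.
Qed.

Lemma single {T : Type} (g : T -> T) x n :
  exists l, length l = ind (has_size (comp g x) n) /\
    fc (fun A => (is_cycle g A /\ has_size A n) /\ A x) l.
Proof.
  destruct (classic (has_size (comp g x) n)) as [H|H].
  - rewrite ind_T; auto. exists [comp g x]. split; auto. split; [|split].
    + intros A [<-|[]]. split; [split|]; auto 2.
      * apply cycle_char. exists x. intros z; tauto.
      * apply comp_refl.
    + intros A [[HA _] Hx]. exists (comp g x). split. left; auto.
      apply cycle_at; auto.
    + simpl. split; [intros B []|auto].
  - rewrite ind_F; auto. exists []. split; auto. split; [|split].
    + intros A [].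
    + intros A [[HA Hs] Hx]. exfalso. apply H. eapply hs_ext; [|apply Hs].
      apply cycle_at; auto.
    + simpl. auto.
Qed.

Definition r {T : Type} (g : T -> T) (a b : T) n : nat :=
  ind (has_size (comp g a) n) + ind (has_size (comp g b) n /\ ~ comp g a b).

Lemma Rlem {T : Type} (g : T -> T) a b n :
  exists l, length l = r g a b n /\
    fc (fun A => (is_cycle g A /\ has_size A n) /\ (A a \/ A b)) l.
Proof.
  unfold r. destruct (classic (comp g a b)) as [Hc|Hc].
  - rewrite (ind_F (_ /\ _)) by tauto.
    destruct (single g a n) as [l [Hl Hf]]. exists l. split. lia.
    eapply fc_ext; [|apply Hf]. intros A. split; [tauto|].
    intros [[Hcy Hs] [Ha|Hb]]; split; auto. apply (cycle_at g A b Hcy Hb). apply comp_sym; auto.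
  - rewrite (ind_ext (_ /\ ~ _) (has_size (comp g b) n)) by tauto.
    destruct (single g a n) as [l1 [Hl1 Hf1]].
    destruct (single g b n) as [l2 [Hl2 Hf2]].
    exists (l1 ++ l2). split. rewrite length_app. lia.
    eapply fc_ext; [|apply fc_union; [apply Hf1|apply Hf2|]].
    + intros A. tauto.
    + intros A B [[HA _] Ha] [[HB _] Hb] E. apply Hc.
      apply (cycle_at g B a HB); auto. apply E. auto.
Qed.

Definition Dab {T : Type} (a b w : T) : Prop := w = a \/ w = b.

Definition Cond {T : Type} (f g : T -> T) (a b : T) : Prop :=
  forall w, g w = f w \/ Dab a b (g w) \/ (Dab a b w /\ exists d, Dab a b d /\ g w = f d).

Lemma shared_comp {T : Type} (f g : T -> T) a b x :
  Cond f g a b -> Cond g f a b -> (forall z, comp f x z -> ~ Dab a b z) ->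
  same_set (comp f x) (comp g x).
Proof.
  intros C1 C2 Hav.
  assert (Fw : forall y, comp f x y -> forall k, it g k y = it f k y).
  { intros y Hy k. induction k; simpl; auto. rewrite IHk.
    destruct (C2 (it f k y)) as [E|[E|[E _]]].
    - auto.
    - exfalso. apply (Hav (f (it f k y))); auto. apply comp_g. eapply comp_trans; eauto. apply comp_it.
    - exfalso. apply (Hav (it f k y)); auto. eapply comp_trans; eauto. apply comp_it. }
  assert (Bw : forall j z, comp f x (it g j z) -> comp f x z).
  { induction j; intros z H; simpl in *; auto.
    change (comp f x (it g (S j) z)) in H. rewrite it_S' in H. apply IHj in H.
    destruct (C1 z) as [E|[E|[E [d [Hd E']]]]].
    - rewrite E in H. apply (proj1 (comp_g f x z)) in H. auto.
    - exfalso. apply (Hav (g z)); auto.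
    - exfalso. rewrite E' in H. apply (proj1 (comp_g f x d)) in H. apply (Hav d); auto. }
  intros z. split.
  - intros [i [j E]]. exists i, j. rewrite (Fw x (comp_refl f x)), (Fw z); auto. exists i, j. auto.
  - intros [i [j E]]. apply (Bw j). rewrite <- E. rewrite (Fw x (comp_refl f x)). apply comp_it.
Qed.

Lemma shared_cycle {T : Type} (f g : T -> T) a b A :
  Cond f g a b -> Cond g f a b -> is_cycle f A -> ~ A a -> ~ A b -> is_cycle g A.
Proof.
  intros C1 C2 HA Ha Hb. apply cycle_char in HA. destruct HA as [x Hx].
  apply cycle_char. exists x. eapply same_set_trans; [apply Hx|].
  apply (shared_comp f g a b); auto.
  intros z Hz [E|E]; subst; [apply Ha|apply Hb]; apply Hx; auto.
Qed.

Lemma transfer {T : Type} (f g : T -> T) a b n k :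
  Cond f g a b -> Cond g f a b -> Cn f n k ->
  r f a b n <= k /\ Cn g n (k - r f a b n + r g a b n).
Proof.
  intros C1 C2 H. unfold Cn in *. apply fc_family in H. destruct H as [l [Hl Hfc]].
  destruct (fc_split (fun S => is_cycle f S /\ has_size S n) (fun A => A a \/ A b) l) as [l1 [l2 [H1 [H2 H3]]]]; auto.
  { intros A B E. rewrite (E a), (E b). auto. }
  destruct (Rlem f a b n) as [lf [Hlf Hff]].
  pose proof (fc_uniq _ _ _ H1 Hff) as U.
  destruct (Rlem g a b n) as [lg [Hlg Hfg]].
  split. lia.
  apply fc_family. exists (lg ++ l2). split. rewrite length_app. lia.
  apply (fc_ext (fun A => ((is_cycle g A /\ has_size A n) /\ (A a \/ A b)) \/
     ((is_cycle g A /\ has_size A n) /\ ~ (A a \/ A b)))); [|apply fc_union; [apply Hfg| |]].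
  - intros A. split; [tauto|]. intros HA. destruct (classic (A a \/ A b)); tauto.
  - eapply fc_ext; [|apply H2]. intros A. split; intros [[HA Hs] Hn]; split; auto; split; auto.
    + apply (shared_cycle f g a b); auto.
    + apply (shared_cycle g f a b); auto.
  - simpl. intros A B [_ HA] [_ HB] E. apply HB. rewrite <- (E a), <- (E b). auto.
Qed.

Definition Tr {T : Type} (h : T -> T) (a b : T) : Prop :=
  a <> b /\ h a = b /\ h b = a /\ forall x, x <> a -> x <> b -> h x = x.

Lemma Tr_sym {T : Type} (h : T -> T) a b : Tr h a b -> Tr h b a.
Proof. intros [H1 [H2 [H3 H4]]]. split; [|split; [|split]]; auto. Qed.

Lemma Tr_hh {T : Type} (h : T -> T) a b x : Tr h a b -> h (h x) = x.
Proof.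
  intros [H1 [H2 [H3 H4]]].
  destruct (classic (x = a)) as [->|Ha]. rewrite H2; auto.
  destruct (classic (x = b)) as [->|Hb]. rewrite H3; auto.
  rewrite (H4 x Ha Hb), (H4 x Ha Hb). auto.
Qed.

Lemma g_inj {T : Type} (f h : T -> T) a b :
  injective f -> Tr h a b -> injective (fun y => h (f y)).
Proof.
  intros Hf Ht x y E. apply Hf. rewrite <- (Tr_hh h a b (f x) Ht), <- (Tr_hh h a b (f y) Ht).
  simpl in E. rewrite E. auto.
Qed.

Lemma L_agree {T : Type} (f h : T -> T) a b x K :
  Tr h a b -> (forall j, 1 <= j -> j <= K -> it f j x <> a /\ it f j x <> b) ->
  forall k, k <= K -> it (fun y => h (f y)) k x = it f k x.
Proof.
  intros [_ [_ [_ Hfix]]] H k. induction k; intros Hk; simpl; auto.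
  rewrite IHk by lia. destruct (H (S k)) as [H1 H2]; try lia. apply Hfix; auto.
Qed.

Lemma it_last {T : Type} (g : T -> T) n x : 1 <= n -> it g n x = g (it g (n - 1) x).
Proof. intros Hn. destruct n. lia. simpl. rewrite Nat.sub_0_r. auto. Qed.

Lemma case2 {T : Type} (f h : T -> T) a b :
  injective f -> Tr h a b -> Per f a -> ~ Per f b ->
  ~ Per (fun y => h (f y)) a /\ ~ Per (fun y => h (f y)) b.
Proof.
  intros Hf Ht Hpa Hnb. pose proof Ht as [Hab [Ha [Hb Hfix]]].
  destruct (Per_per f a Hpa) as [p [Hp1 [Hpp Hmin]]].
  assert (Hnc : ~ comp f a b) by (intro C; apply Hnb; eapply Per_comp; eauto).
  assert (N1 : forall j, it f j a <> b) by (intros j E; apply Hnc; exists j, 0; auto).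
  assert (N2 : forall j, it f j b <> a) by (intros j E; apply Hnc; exists 0, j; auto).
  assert (N3 : forall j, 1 <= j -> it f j b <> b) by (intros j Hj E; apply Hnb; exists j; auto).
  assert (Aga : forall k, k <= p - 1 -> it (fun y => h (f y)) k a = it f k a).
  { apply (L_agree f h a b); auto. intros j Hj1 Hj2. split; auto. apply Hmin; lia. }
  assert (Gp : it (fun y => h (f y)) p a = b).
  { rewrite it_last, Aga by lia. rewrite <- (it_last f p) by lia. rewrite Hpp. auto. }
  assert (Agb : forall k, it (fun y => h (f y)) k b = it f k b).
  { intros k. apply (L_agree f h a b b k); auto. }
  split.
  - intros [m [Hm E]]. destruct (Nat.lt_ge_cases m p).
    + rewrite Aga in E by lia. apply (Hmin m); auto.
    + replace m with ((m - p) + p) in E by lia. rewrite it_add, Gp, Agb in E. apply (N2 _ E).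
  - intros [m [Hm E]]. rewrite Agb in E. apply (N3 m); auto.
Qed.

Lemma case1b {T : Type} (f h : T -> T) a b :
  injective f -> Tr h a b -> Per f a -> Per f b -> ~ comp f a b ->
  Per (fun y => h (f y)) a /\ comp (fun y => h (f y)) a b.
Proof.
  intros Hf Ht Hpa Hpb Hnc. pose proof Ht as [Hab [Ha [Hb Hfix]]].
  destruct (Per_per f a Hpa) as [p [Hp1 [Hpp Hmin]]].
  destruct (Per_per f b Hpb) as [q [Hq1 [Hqq Hminq]]].
  assert (N1 : forall j, it f j a <> b) by (intros j E; apply Hnc; exists j, 0; auto).
  assert (N2 : forall j, it f j b <> a) by (intros j E; apply Hnc; exists 0, j; auto).
  assert (Aga : forall k, k <= p - 1 -> it (fun y => h (f y)) k a = it f k a).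
  { apply (L_agree f h a b); auto. intros j Hj1 Hj2. split; auto. apply Hmin; lia. }
  assert (Gp : it (fun y => h (f y)) p a = b).
  { rewrite it_last, Aga by lia. rewrite <- (it_last f p) by lia. rewrite Hpp. auto. }
  assert (Agb : forall k, k <= q - 1 -> it (fun y => h (f y)) k b = it f k b).
  { apply (L_agree f h a b); auto. intros j Hj1 Hj2. split; auto. apply Hminq; lia. }
  assert (Gq : it (fun y => h (f y)) q b = a).
  { rewrite it_last, Agb by lia. rewrite <- (it_last f q) by lia. rewrite Hqq. auto. }
  split.
  - exists (q + p). split. lia. rewrite it_add, Gp, Gq. auto.
  - exists p, 0. rewrite Gp. auto.
Qed.

Lemma case1a {T : Type} (f h : T -> T) a b :
  injective f -> Tr h a b -> Per f a -> comp f a b ->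
  Per (fun y => h (f y)) a /\ Per (fun y => h (f y)) b /\ ~ comp (fun y => h (f y)) a b.
Proof.
  intros Hf Ht Hpa Hc. pose proof Ht as [Hab [Ha [Hb Hfix]]].
  destruct (Per_per f a Hpa) as [p [Hp1 [Hpp Hmin]]].
  destruct (per_char f p a b Hf Hp1 Hpp Hc) as [i [Hip Hbi]].
  assert (Hi : i <> 0) by (intro; subst; simpl in Hab; auto).
  assert (Nb : forall j, 1 <= j -> j < i -> it f j a <> b).
  { intros j Hj1 Hj2 E. rewrite Hbi in E. apply it_diff in E; auto. apply (Hmin (i - j)); auto; lia. }
  assert (Aga : forall k, k <= i - 1 -> it (fun y => h (f y)) k a = it f k a).
  { apply (L_agree f h a b); auto. intros j Hj1 Hj2. split. apply Hmin; lia. apply Nb; lia. }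
  assert (Gi : it (fun y => h (f y)) i a = a).
  { rewrite it_last, Aga by lia. rewrite <- (it_last f i) by lia. rewrite <- Hbi. auto. }
  assert (Bj : forall j, it f j b = it f (j + i) a) by (intros j; rewrite Hbi, it_add; auto).
  assert (Agb : forall k, k <= p - i - 1 -> it (fun y => h (f y)) k b = it f k b).
  { apply (L_agree f h a b); auto. intros j Hj1 Hj2. rewrite Bj. split.
    - apply Hmin; lia.
    - intros E. rewrite Hbi in E. symmetry in E. apply it_diff in E; [|auto|lia].
      replace (j + i - i) with j in E by lia. apply (Hmin j); auto; lia. }
  assert (Gb : it (fun y => h (f y)) (p - i) b = b).
  { rewrite it_last, Agb by lia. rewrite <- (it_last f (p - i)) by lia. rewrite Bj.
    replace (p - i + i) with p by lia. rewrite Hpp. auto. }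
  split; [|split].
  - exists i. split; auto. lia.
  - exists (p - i). split; auto. lia.
  - intros C. assert (Hi1 : 1 <= i) by lia.
    destruct (per_char _ i a b (g_inj f h a b Hf Ht) Hi1 Gi C) as [k [Hk E]].
    rewrite Aga in E by lia. destruct k.
    + simpl in E. auto.
    + apply (Nb (S k)); auto; lia.
Qed.

Lemma case4sub {T : Type} (f h : T -> T) a b d :
  injective f -> Tr h a b -> 1 <= d -> b = it f d a -> ~ Per f a ->
  Per (fun y => h (f y)) a /\ ~ Per (fun y => h (f y)) b /\ ~ comp (fun y => h (f y)) a b.
Proof.
  intros Hf Ht Hd Hbd Hna. pose proof Ht as [Hab [Ha [Hb Hfix]]].
  assert (Na : forall j, 1 <= j -> it f j a <> a) by (intros j Hj E; apply Hna; exists j; auto).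
  assert (Nb : forall j, 1 <= j -> j < d -> it f j a <> b).
  { intros j Hj1 Hj2 E. rewrite Hbd in E. apply it_diff in E; auto. apply (Na (d - j)); auto; lia. }
  assert (Aga : forall k, k <= d - 1 -> it (fun y => h (f y)) k a = it f k a).
  { apply (L_agree f h a b); auto. intros j Hj1 Hj2. split. apply Na; lia. apply Nb; lia. }
  assert (Gd : it (fun y => h (f y)) d a = a).
  { rewrite it_last, Aga by lia. rewrite <- (it_last f d) by lia. rewrite <- Hbd. auto. }
  assert (Bj : forall j, it f j b = it f (j + d) a) by (intros j; rewrite Hbd, it_add; auto).
  assert (Nbb : forall j, 1 <= j -> it f j b <> b).
  { intros j Hj E. rewrite Bj, Hbd in E. symmetry in E. apply it_diff in E; [|auto|lia].
    replace (j + d - d) with j in E by lia. apply (Na j); auto. }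
  assert (Agb : forall k, it (fun y => h (f y)) k b = it f k b).
  { intros k. apply (L_agree f h a b b k); auto. intros j Hj1 Hj2. rewrite Bj. split.
    - apply Na; lia.
    - rewrite <- Bj. apply Nbb; auto. }
  assert (HPa : Per (fun y => h (f y)) a) by (exists d; auto).
  assert (HnPb : ~ Per (fun y => h (f y)) b).
  { intros [m [Hm E]]. rewrite Agb in E. apply (Nbb m); auto. }
  split; [|split]; auto.
  intros C. apply HnPb. eapply Per_comp; eauto. apply (g_inj f h a b Hf Ht).
Qed.

Lemma fam0 {T : Type} (P : (T -> Prop) -> Prop) A : family_card P 0 -> P A -> False.
Proof.
  intros H HA. apply fc_family in H. destruct H as [[|? ?] [Hl [_ [H2 _]]]]; [|simpl in Hl; lia].
  destruct (H2 A HA) as [B [[] _]].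
Qed.

Lemma fam1 {T : Type} (P : (T -> Prop) -> Prop) A B :
  family_card P 1 -> P A -> P B -> same_set A B.
Proof.
  intros H HA HB. apply fc_family in H.
  destruct H as [[|X [|? ?]] [Hl [_ [H2 _]]]]; simpl in Hl; try lia.
  destruct (H2 A HA) as [Y [[<-|[]] E1]]. destruct (H2 B HB) as [Z [[<-|[]] E2]].
  eapply same_set_trans; eauto. apply same_set_sym; auto.
Qed.

Lemma inf_kind {T : Type} (f : T -> T) x :
  injective f -> ~ Per f x -> open_cycle f (comp f x) \/ forward_cycle f (comp f x).
Proof.
  intros Hf Hn.
  assert (Hc : is_cycle f (comp f x)) by (apply cycle_char; exists x; intros z; tauto).
  assert (Hi : infinite_set (comp f x)) by (intros n Hs; apply Hn; eapply hs_Per; eauto).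
  destruct (classic (not_in_image f (comp f x))).
  - right. repeat split; auto; apply Hc.
  - left. repeat split; auto; apply Hc.
Qed.

Lemma case4comp {T : Type} (f : T -> T) a b :
  injective f -> (exists x y : nat, x + y = 1 /\ Copen f x /\ Cfwd f y) ->
  ~ Per f a -> ~ Per f b -> comp f a b.
Proof.
  intros Hf [x [y [Hxy [Ho Hw]]]] Ha Hb.
  assert (E : same_set (comp f a) (comp f b)).
  { destruct (inf_kind f a Hf Ha) as [Ka|Ka]; destruct (inf_kind f b Hf Hb) as [Kb|Kb];
      destruct x; [|destruct x; [|lia]|..]; try (destruct y; [|destruct y; [|lia]]); simpl in *;
      try lia;
      try (exfalso; eapply fam0; [exact Ho|]; eauto; fail);
      try (exfalso; eapply fam0; [exact Hw|]; eauto; fail).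
    - eapply fam1; [exact Ho| |]; eauto.
    - eapply fam1; [exact Hw| |]; eauto. }
  apply (E b). apply comp_refl.
Qed.

Definition E {T : Type} (g : T -> T) a b : nat :=
  ind (Per g a) + ind (Per g b /\ ~ comp g a b).

Lemma key {T : Type} (f h : T -> T) a b :
  injective f -> Tr h a b -> (exists x y : nat, x + y = 1 /\ Copen f x /\ Cfwd f y) ->
  (Z.of_nat (E f a b) - Z.of_nat (E (fun y => h (f y)) a b) = 1 \/
   Z.of_nat (E f a b) - Z.of_nat (E (fun y => h (f y)) a b) = -1)%Z.
Proof.
  intros Hf Ht Hoc. unfold E.
  destruct (classic (Per f a)) as [Pa|Pa]; destruct (classic (Per f b)) as [Pb|Pb].
  - destruct (classic (comp f a b)) as [C|C].
    + destruct (case1a f h a b Hf Ht Pa C) as [G1 [G2 G3]].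
      rewrite (ind_T (Per f a)), (ind_F (_ /\ ~ comp f a b)), (ind_T (Per _ a)), (ind_T (_ /\ _));
        auto; try tauto; simpl; lia.
    + destruct (case1b f h a b Hf Ht Pa Pb C) as [G1 G2].
      rewrite (ind_T (Per f a)), (ind_T (_ /\ ~ comp f a b)), (ind_T (Per _ a)), (ind_F (_ /\ ~ _));
        auto; try tauto; simpl; lia.
  - destruct (case2 f h a b Hf Ht Pa Pb) as [G1 G2].
    rewrite (ind_T (Per f a)), (ind_F (_ /\ ~ comp f a b)), (ind_F (Per _ a)), (ind_F (_ /\ ~ _));
      auto; try tauto; simpl; lia.
  - destruct (case2 f h b a Hf (Tr_sym h a b Ht) Pb Pa) as [G1 G2].
    assert (C : ~ comp f a b) by (intros C; apply Pa; eapply Per_comp; eauto; apply comp_sym; auto).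
    rewrite (ind_F (Per f a)), (ind_T (_ /\ ~ comp f a b)), (ind_F (Per _ a)), (ind_F (_ /\ ~ _));
      auto; try tauto; simpl; lia.
  - pose proof (case4comp f a b Hf Hoc Pa Pb) as [i [j Eij]].
    destruct (Nat.le_gt_cases j i) as [Hji|Hji].
    + assert (Hb : b = it f (i - j) a).
      { replace i with (j + (i - j)) in Eij by lia. rewrite it_add in Eij.
        apply it_inj in Eij; auto. }
      assert (1 <= i - j).
      { destruct (i - j) eqn:?; [|lia]. simpl in Hb. destruct Ht. congruence. }
      destruct (case4sub f h a b (i - j) Hf Ht H Hb Pa) as [G1 [G2 G3]].
      rewrite (ind_F (Per f a)), (ind_F (_ /\ ~ comp f a b)), (ind_T (Per _ a)), (ind_F (_ /\ ~ _));
        auto; try tauto; simpl; lia.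
    + assert (Ha : a = it f (j - i) b).
      { replace j with (i + (j - i)) in Eij by lia. rewrite it_add in Eij.
        apply it_inj in Eij; auto. }
      assert (1 <= j - i).
      { destruct (j - i) eqn:?; [|lia]. simpl in Ha. destruct Ht. congruence. }
      destruct (case4sub f h b a (j - i) Hf (Tr_sym h a b Ht) H Ha Pb) as [G1 [G2 G3]].
      assert (~ comp (fun y => h (f y)) a b) by (intros C; apply G3; apply comp_sym; auto).
      rewrite (ind_F (Per f a)), (ind_F (_ /\ ~ comp f a b)), (ind_F (Per _ a)), (ind_T (_ /\ ~ _));
        auto; try tauto; simpl; lia.
Qed.

Fixpoint zsum (a : nat -> nat) (N : nat) : Z :=
  match N with O => 0%Z | S m => (zsum a m + Z.of_nat (a (S m)))%Z end.

Lemma zdiff_zsum a b N : zdiff_sum a b N = (zsum a N - zsum b N)%Z.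
Proof. induction N; simpl; auto. rewrite IHN. lia. Qed.

Lemma zsum_ext a b N : (forall n, 1 <= n -> n <= N -> a n = b n) -> zsum a N = zsum b N.
Proof. induction N; simpl; auto. intros H. rewrite IHN, H; auto; lia. Qed.

Lemma zsum_add a b N : zsum (fun n => a n + b n) N = (zsum a N + zsum b N)%Z.
Proof. induction N; simpl; auto. rewrite IHN. lia. Qed.

Lemma zsum_pt s N : 1 <= s -> zsum (fun n => ind (n = s)) N = Z.of_nat (ind (s <= N)).
Proof.
  intros Hs. induction N; simpl.
  - rewrite ind_F; auto. lia.
  - rewrite IHN. destruct (Nat.lt_total s (S N)) as [H|[H|H]].
    + rewrite (ind_T (s <= N)), (ind_F (S N = s)), (ind_T (s <= S N)); lia.
    + rewrite (ind_F (s <= N)), (ind_T (S N = s)), (ind_T (s <= S N)); lia.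
    + rewrite (ind_F (s <= N)), (ind_F (S N = s)), (ind_F (s <= S N)); lia.
Qed.

Lemma zsum_ind {T : Type} (C : T -> Prop) (Q : Prop) N :
  (forall s, has_size C s -> 1 <= s /\ s <= N) ->
  zsum (fun n => ind (has_size C n /\ Q)) N = Z.of_nat (ind ((exists s, has_size C s) /\ Q)).
Proof.
  intros HB. destruct (classic ((exists s, has_size C s) /\ Q)) as [[[s Hs] HQ]|Hn].
  - rewrite ind_T by eauto. destruct (HB s Hs) as [H1 H2].
    rewrite (zsum_ext _ (fun n => ind (n = s))).
    + rewrite zsum_pt, ind_T; auto.
    + intros n _ _. apply ind_ext. split.
      * intros [Hn _]. apply (hs_uniq C); auto.
      * intros ->. auto.
  - rewrite ind_F by auto. rewrite (zsum_ext _ (fun _ => 0)).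
    + clear. induction N; simpl; auto. rewrite IHN. auto.
    + intros n _ _. apply ind_F. intros [H1 H2]. apply Hn. eauto.
Qed.

Lemma zsum_r {T : Type} (g : T -> T) a b N :
  injective g ->
  (forall s, has_size (comp g a) s -> s <= N) -> (forall s, has_size (comp g b) s -> s <= N) ->
  zsum (r g a b) N = Z.of_nat (E g a b).
Proof.
  intros Hg Ha Hb. unfold r, E.
  rewrite (zsum_ext _ (fun n => ind (has_size (comp g a) n /\ True) +
      ind (has_size (comp g b) n /\ ~ comp g a b))).
  2:{ intros n _ _. f_equal. apply ind_ext. tauto. }
  rewrite zsum_add, !zsum_ind.
  - rewrite (ind_ext (_ /\ True) (Per g a)), (ind_ext (_ /\ ~ _) (Per g b /\ ~ comp g a b)).
    + lia.
    + rewrite <- fin_iff; auto. tauto.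
    + rewrite <- fin_iff; auto. tauto.
  - intros s Hs. split; auto. eapply hs_pos; [|exact Hs]. apply comp_refl.
  - intros s Hs. split; auto. eapply hs_pos; [|exact Hs]. apply comp_refl.
Qed.

Lemma bound_ex {T : Type} (C : T -> Prop) : exists M, forall s, has_size C s -> s <= M.
Proof.
  destruct (classic (exists s, has_size C s)) as [[s Hs]|Hn].
  - exists s. intros t Ht. rewrite (hs_uniq C t s); auto.
  - exists 0. intros t Ht. exfalso. eauto.
Qed.

Lemma zdiff_r (cf rf rg : nat -> nat) N :
  (forall n, 1 <= n -> rf n <= cf n) ->
  zdiff_sum cf (fun n => cf n - rf n + rg n) N = zdiff_sum rf rg N.
Proof.
  intros H. induction N; simpl; auto. rewrite IHN. specialize (H (S N)). lia.
Qed.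

Lemma k_inj {T : Type} (f h : T -> T) a b :
  injective f -> Tr h a b -> injective (fun y => f (h y)).
Proof.
  intros Hf Ht x y E. apply Hf in E.
  rewrite <- (Tr_hh h a b x Ht), <- (Tr_hh h a b y Ht), E. auto.
Qed.

Lemma it_conj {T : Type} (f h : T -> T) a b m x :
  Tr h a b -> it (fun y => f (h y)) m x = h (it (fun y => h (f y)) m (h x)).
Proof.
  intros Ht. induction m; simpl.
  - rewrite (Tr_hh h a b x Ht). auto.
  - rewrite IHm, (Tr_hh h a b _ Ht), (Tr_hh h a b _ Ht). auto.
Qed.

Lemma h_inj {T : Type} (h : T -> T) a b x y : Tr h a b -> h x = h y -> x = y.
Proof. intros Ht E. rewrite <- (Tr_hh h a b x Ht), <- (Tr_hh h a b y Ht), E. auto. Qed.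

Lemma r_conj {T : Type} (f h : T -> T) a b n :
  injective f -> Tr h a b -> r (fun y => f (h y)) a b n = r (fun y => h (f y)) a b n.
Proof.
  intros Hf Ht. pose proof Ht as [Hab [Ha [Hb Hfix]]].
  assert (Hg : injective (fun y => h (f y))) by (apply (g_inj f h a b); auto).
  assert (Hk : injective (fun y => f (h y))) by (apply (k_inj f h a b); auto).
  assert (Ek : forall m x, it (fun y => f (h y)) m x = x <-> it (fun y => h (f y)) m (h x) = h x).
  { intros m x. rewrite (it_conj f h a b m x Ht). split; intros E.
    - rewrite <- E at 2. rewrite (Tr_hh h a b _ Ht). auto.
    - rewrite E, (Tr_hh h a b _ Ht). auto. }
  assert (Ep : forall x, has_size (comp (fun y => f (h y)) x) n <->
                         has_size (comp (fun y => h (f y)) (h x)) n).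
  { intros x. rewrite (hs_iff _ _ _ Hk), (hs_iff _ _ _ Hg). unfold per.
    split; intros [H1 [H2 H3]]; split; auto; split.
    - apply Ek; auto.
    - intros m Hm1 Hm2 E. apply (H3 m Hm1 Hm2). apply Ek; auto.
    - apply Ek; auto.
    - intros m Hm1 Hm2 E. apply (H3 m Hm1 Hm2). apply Ek; auto. }
  assert (Ec : comp (fun y => f (h y)) a b <-> comp (fun y => h (f y)) b a).
  { unfold comp. setoid_rewrite (it_conj f h a b _ _ Ht). rewrite Ha, Hb.
    split; intros [i [j E]]; exists i, j.
    - apply (h_inj h a b); auto.
    - rewrite E. auto. }
  unfold r. rewrite (ind_ext (has_size (comp _ a) n) _ (Ep a)),
    (ind_ext (_ /\ ~ comp _ a b) (has_size (comp (fun y => h (f y)) a) n /\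
       ~ comp (fun y => h (f y)) b a)).
  2:{ rewrite Ep, Ec, Hb. tauto. }
  rewrite Ha. destruct (classic (comp (fun y => h (f y)) a b)) as [C|C].
  - rewrite (ind_F (_ /\ ~ comp _ b a)), (ind_F (_ /\ ~ comp _ a b)) by (intros [_ X]; apply X;
      first [exact C | apply comp_sym; exact C]).
    f_equal. apply ind_ext. split; apply hs_ext; [apply same_set_sym|]; apply comp_same; auto.
  - rewrite (ind_ext (_ /\ ~ comp _ b a) (has_size (comp (fun y => h (f y)) a) n)).
    2:{ split; [tauto|]. intros; split; auto. intros X; apply C, comp_sym; auto. }
    rewrite (ind_ext (_ /\ ~ comp _ a b) (has_size (comp (fun y => h (f y)) b) n)) by tauto.
    lia.
Qed.

Theorem mainTheorem16 (T : Type) (HT : countably_infinite T)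
  (f h : T -> T) (Hf : injective f)
  (Hoc : exists a b : nat, a + b = 1 /\ Copen f a /\ Cfwd f b)
  (Hfin : forall n : nat, 1 <= n -> exists k : nat, Cn f n k)
  (Hh : transposition h) :
  exists (cf cfh chf : nat -> nat) (N : nat),
    (forall n, 1 <= n -> Cn f n (cf n) /\ Cn (comp_lr f h) n (cfh n)
                         /\ Cn (comp_lr h f) n (chf n)) /\
    (forall n, N < n -> cf n = cfh n /\ cf n = chf n) /\
    zdiff_sum cf cfh N = zdiff_sum cf chf N /\
    (zdiff_sum cf cfh N = 1%Z \/ zdiff_sum cf cfh N = (-1)%Z).
Proof.
  destruct Hh as [a [b [Hab [Ha [Hb Hfix]]]]].
  assert (Ht : Tr h a b) by (split; auto).
  set (g := fun y => h (f y)). set (k := fun y => f (h y)).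
  assert (Hg : injective g) by (apply (g_inj f h a b); auto).
  assert (Dh : forall x, Dab a b x -> Dab a b (h x)).
  { intros x [->| ->]; [right|left]; auto. }
  assert (C1 : Cond f g a b).
  { intros w. unfold g. destruct (classic (Dab a b (f w))) as [D|D].
    - right; left. auto.
    - left. apply Hfix; intros E; apply D; [left|right]; auto. }
  assert (C2 : Cond g f a b).
  { intros w. unfold g. destruct (classic (Dab a b (f w))) as [D|D].
    - right; left. auto.
    - left. symmetry. apply Hfix; intros E; apply D; [left|right]; auto. }
  assert (C3 : Cond f k a b).
  { intros w. unfold k. destruct (classic (Dab a b w)) as [D|D].
    - right; right. split; auto. exists (h w). split; auto.
    - left. rewrite Hfix; auto; intros E; apply D; [left|right]; auto. }
  assert (C4 : Cond k f a b).
  { intros w. unfold k. destruct (classic (Dab a b w)) as [D|D].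
    - right; right. split; auto. exists (h w). split; auto. rewrite (Tr_hh h a b w Ht). auto.
    - left. rewrite Hfix; auto; intros E; apply D; [left|right]; auto. }
  assert (Hall : forall n, exists c, Cn f n c).
  { intros [|n]; [|apply Hfin; lia]. exists 0. apply fc_family. exists []. split; auto.
    split; [|split]; simpl; auto.
    - intros A [].
    - intros A [HA Hs]. exfalso. destruct HA as [[x Hx] _].
      pose proof (hs_pos A x 0 Hx Hs). lia. }
  set (cf := fun n => proj1_sig (constructive_indefinite_description _ (Hall n))).
  assert (Hcf : forall n, Cn f n (cf n)) by (intros n; exact (proj2_sig (constructive_indefinite_description _ (Hall n)))).
  set (cfh := fun n => cf n - r f a b n + r g a b n).
  destruct (bound_ex (comp f a)) as [M1 HM1].
  destruct (bound_ex (comp f b)) as [M2 HM2].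
  destruct (bound_ex (comp g a)) as [M3 HM3].
  destruct (bound_ex (comp g b)) as [M4 HM4].
  set (N := M1 + M2 + M3 + M4).
  assert (Hle : forall n, r f a b n <= cf n) by (intros n; apply (transfer f g a b n (cf n)); auto).
  exists cf, cfh, cfh, N. split; [|split; [|split]].
  - intros n Hn. split; [|split]; auto.
    + apply (transfer f g a b n (cf n)); auto.
    + unfold cfh. rewrite <- (r_conj f h a b n Hf Ht : r k a b n = r g a b n). apply (transfer f k a b n (cf n)); auto.
  - intros n Hn. unfold cfh.
    assert (r f a b n = 0).
    { unfold r. rewrite !ind_F; auto.
      - intros [X _]. apply HM2 in X. lia.
      - intros X. apply HM1 in X. lia. }
    assert (r g a b n = 0).
    { unfold r. rewrite !ind_F; auto.
      - intros [X _]. apply HM4 in X. lia.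
      - intros X. apply HM3 in X. lia. }
    lia.
  - auto.
  - unfold cfh. rewrite zdiff_r by auto. rewrite zdiff_zsum.
    rewrite (zsum_r f a b N), (zsum_r g a b N); auto;
      try (intros s Hs; first [apply HM1 in Hs|apply HM2 in Hs|apply HM3 in Hs|apply HM4 in Hs]; unfold N; lia).
    apply (key f h a b); auto.
Qed.
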